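(* Let $(X,+,d)$ be an Abelian metric group with translation-invariant metric $d$ such that every non-empty open ball in $X$ contains infinitely many elements. Let $A\in K(X)$. If the spectre operator $S:K(X)\to K(X)$ is continuous at $A$ (with respect to the Pompeiu–Hausdorff metric), then $S(A)=\{0\}$.
   Context: $d$ satisfies $d(x,y)=d(x+z,y+z)$ for all $x,y,z\in X$; $0$ is the neutral element. $K(X)$ is the family of non-empty compact subsets of $X$ with the Pompeiu–Hausdorff metric $d_H(A,B)=\max\{\sup_{a\in A}d(a,B),\sup_{b\in B}d(A,b)\}$. The spectre of $A\subset X$ is $S(A):=\{z\in X:\ \forall_{a\in A}\ (a+z\in A \text{ or } a-z\in A)\}$; it is compact for compact non-empty $A$. *)

(* Defs.v *)
From HB Require Import structures.
From mathcomp Require Import all_boot all_order all_algebra.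
From mathcomp Require Import boolp classical_sets cardinality reals.
Set Implicit Arguments. Unset Strict Implicit. Unset Printing Implicit Defensive.
Import Order.TTheory GRing.Theory Num.Theory.
Local Open Scope classical_set_scope.
Local Open Scope ring_scope.

Section Defs.
Variables (X : zmodType) (R : realType) (d : X -> X -> R).

Definition is_metric : Prop :=
  (forall x y, 0 <= d x y) /\ (forall x y, d x y = 0 <-> x = y) /\
  (forall x y, d x y = d y x) /\ (forall x y z, d x z <= d x y + d y z).

Definition translation_invariant : Prop :=
  forall x y z, d x y = d (x + z) (y + z).

Definition oball (x : X) (r : R) : set X := [set y | d x y < r].

Definition metric_open (U : set X) : Prop :=
  forall x, U x -> exists2 r : R, 0 < r & oball x r `<=` U.

Definition metric_compact (A : set X) : Prop :=
  forall (I : Type) (U : I -> set X),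
    (forall i, metric_open (U i)) -> A `<=` \bigcup_i U i ->
    exists2 F : set I, finite_set F & A `<=` \bigcup_(i in F) U i.

Definition inK (A : set X) : Prop := A !=set0 /\ metric_compact A.

Definition dist_pt_set (a : X) (B : set X) : R := inf [set d a b | b in B].

Definition dH (A B : set X) : R :=
  Num.max (sup [set dist_pt_set a B | a in A])
          (sup [set dist_pt_set b A | b in B]).

Definition spectre (A : set X) : set X :=
  [set z | forall a, A a -> A (a + z) \/ A (a - z)].

Definition spectre_continuous_at (A : set X) : Prop :=
  forall eps : R, 0 < eps -> exists2 delta : R, 0 < delta &
    forall B, inK B -> dH B A < delta -> dH (spectre B) (spectre A) < eps.

End Defs.

(* Main.v *)
Require Import Defs.
From mathcomp Require Import all_boot all_order all_algebra.
From mathcomp Require Import boolp classical_sets cardinality reals lra.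
Set Implicit Arguments. Unset Strict Implicit. Unset Printing Implicit Defensive.
Import Order.TTheory GRing.Theory Num.Theory.
Local Open Scope classical_set_scope.
Local Open Scope ring_scope.

Definition good (X : zmodType) (t : seq X) : Prop :=
  forall x y u v, x \in t -> y \in t -> u \in t -> v \in t ->
    y - x = v - u -> x = y \/ x = u \/ x = v \/ y = u \/ y = v.

Lemma good_nil (X : zmodType) : good ([::] : seq X).
Proof. by move=> x y u v. Qed.

Lemma good_cons (X : zmodType) (t : seq X) (b : X) : good t ->
  (forall p q r, p \in t -> q \in t -> r \in t -> b - p <> q - r /\ p - b <> q - r) ->
  good (b :: t).
Proof.
move=> gt hb x y u v; rewrite !inE.
move=> /orP[/eqP->|xt] /orP[/eqP->|yt] /orP[/eqP->|ut] /orP[/eqP->|vt] E;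
 try by [left | right; left | do 2 right; left | do 3 right; left | do 4 right].
all: first [ by exfalso; apply: (proj1 (hb _ _ _ _ _ _) E)
      | by exfalso; apply: (proj2 (hb _ _ _ _ _ _) E)
      | by exfalso; apply: (proj1 (hb _ _ _ _ _ _) (esym E))
      | by exfalso; apply: (proj2 (hb _ _ _ _ _ _) (esym E))
      | by move/eqP: E; rewrite subrr subr_eq0 => /eqP ->; left
      | exact: gt ].
Qed.

Lemma core (X : zmodType) (t : seq X) (z x : X) : good t -> z != 0 ->
  (forall a, a \in t -> (a + z \in t) \/ (a - z \in t)) ->
  x \in t -> x + z \in t -> {subset t <= [:: x - z; x; x + z; x + z + z]}.
Proof.
move=> gt nz hz xt xzt w wt.
have wzw : w + z <> w.
  by move=> /eqP; rewrite -{2}(addr0 w) => /eqP/addrI/eqP; rewrite (negbTE nz).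
rewrite !inE.
case: (eqVneq w x) => [->|wx]; first by apply/or4P; apply: Or42; apply/eqP.
case: (eqVneq w (x + z)) => [->|wxz]; first by apply/or4P; apply: Or43; apply/eqP.
have [cw|cw] := hz w wt.
- case: (eqVneq (w + z) x) => [E|c1].
    by rewrite -E addrK; apply/or4P; apply: Or41; apply/eqP.
  case: (eqVneq (w + z) (x + z)) => [E|c2]; first by move/addIr: E => E; rewrite E eqxx in wx.
  have : (w + z) - w = (x + z) - x by rewrite addrAC subrr add0r addrAC subrr add0r.
  case/(gt _ _ _ _ wt cw xt xzt) => [E|[E|[E|[E|E]]]].
  + by case: wzw.
  + by rewrite E eqxx in wx.
  + by rewrite E eqxx in wxz.
  + by rewrite E eqxx in c1.
  + by rewrite E eqxx in c2.
- case: (eqVneq (w - z) x) => [E|c1].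
    by move: wxz; rewrite -E subrK eqxx.
  case: (eqVneq (w - z) (x + z)) => [E|c2].
    by rewrite -E subrK; apply/or4P; apply: Or44; apply/eqP.
  have : w - (w - z) = (x + z) - x by rewrite subKr addrAC subrr add0r.
  case/(gt _ _ _ _ cw wt xt xzt) => [E|[E|[E|[E|E]]]].
  + by move/eqP: E; rewrite -{2}(addr0 w) => /eqP/addrI/eqP; rewrite oppr_eq0 (negbTE nz).
  + by rewrite E eqxx in c1.
  + by rewrite E eqxx in c2.
  + by rewrite E eqxx in wx.
  + by rewrite E eqxx in wxz.
Qed.

Lemma spec_seq (X : zmodType) (t : seq X) : good t -> uniq t -> (4 < size t)%N ->
  spectre [set` t] = [set 0].
Proof.
move=> gt ut st; apply/seteqP; split=> z /=; last first.
  by move=> -> a at_; left; rewrite addr0.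
move=> hz; apply/eqP; apply/negP => /negP nz.
case: t gt ut st hz => [//|x t'] gt ut st hz.
set t := x :: t' in gt ut st hz.
have xt : x \in t by rewrite mem_head.
have hz' : forall a, a \in t -> (a + z \in t) \/ (a - z \in t) by move=> a /hz.
have [xz|xz] := hz' x xt.
- have := uniq_leq_size ut (core gt nz hz' xt xz).
  by rewrite leqNgt st.
- have nz' : - z != 0 by rewrite oppr_eq0.
  have hz'' : forall a, a \in t -> (a + - z \in t) \/ (a - - z \in t).
    by move=> a /hz' [h|h]; [right|left]; rewrite ?opprK.
  have := uniq_leq_size ut (core gt nz' hz'' xt xz).
  by rewrite leqNgt st.
Qed.

Lemma seq_compact (X : zmodType) (R : realType) (d : X -> X -> R) (t : seq X) :
  metric_compact d [set` t].
Proof.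
move=> I U _; elim: t => [|a t IH] cov.
  by exists set0; [exact: finite_set0| move=> x /=; rewrite in_nil].
have [i _ Uia] := cov a (mem_head a t).
have [|F fF cF] := IH.
  by move=> x /= xt; apply: cov; rewrite /= inE xt orbT.
exists (i |` F).
  by rewrite finite_setU; split => //; exact: finite_set1.
move=> x /=; rewrite inE => /orP[/eqP->|xt].
  by exists i => //; left.
have [j Fj Ujx] := cF x xt.
by exists j => //; right.
Qed.

Lemma seq_bound (X : eqType) (R : realType) (f : X -> R) (s : seq X) :
  exists M, forall c, c \in s -> f c <= M.
Proof.
elim: s => [|a s [M hM]]; first by exists 0.
exists (Num.max (f a) M) => c; rewrite inE => /orP[/eqP->|cs].
  by rewrite le_max lexx.
by rewrite le_max hM ?orbT.
Qed.

Lemma net (X : zmodType) (R : realType) (d : X -> X -> R) (hmet : is_metric d)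
  (A : set X) (hA : inK d A) (eps : R) (e0 : 0 < eps) :
  exists s : seq X, (forall c, c \in s -> A c) /\
    (forall y, A y -> exists2 c, c \in s & d c y < eps).
Proof.
have [d0 [deq [dsym dtri]]] := hmet.
pose U (a : X) := [set y | A a /\ d a y < eps].
have op : forall i, metric_open d (U i).
  move=> a y [Aa ay]; exists (eps - d a y); first by rewrite subr_gt0.
  move=> w yw; rewrite /oball /= in yw; split => //.
  have := dtri a y w; lra.
have cov : A `<=` \bigcup_i U i.
  move=> y Ay; exists y => //; split => //.
  by rewrite (proj2 (deq y y) erefl).
have [F fF cF] := hA.2 X U op cov.
have [s0 Fs0] := (proj1 (finite_seqP F)) fF.
  exists [seq c <- s0 | `[< A c >]]; split.
    by move=> c; rewrite mem_filter => /andP[/asboolP].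
  move=> y Ay; have [c Fc [Ac cy]] := cF y Ay.
  exists c => //; rewrite mem_filter; apply/andP; split.
    exact/asboolP.
  by move: Fc; rewrite Fs0.
Qed.

Lemma build (X : zmodType) (R : realType) (d : X -> X -> R)
  (hinf : forall (x : X) (r : R), 0 < r -> infinite_set (oball d x r))
  (eps : R) (e0 : 0 < eps) (s : seq X) :
  exists t : seq X, [/\ good t, uniq t, size t = size s,
    (forall c, c \in s -> exists2 b, b \in t & d c b < eps) &
    (forall b, b \in t -> exists2 c, c \in s & d c b < eps)].
Proof.
elim: s => [|a s [t [gt ut st h1 h2]]].
  by exists [::]; split => //; exact: good_nil.
pose pr := [seq (q, r) | q <- t, r <- t].
pose w := t ++ [seq qr.1 - qr.2 + p | p <- t, qr <- pr]
            ++ [seq p - (qr.1 - qr.2) | p <- t, qr <- pr].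
have [b [ab bw]] : exists b, d a b < eps /\ b \notin w.
  case: (pselect (exists b, d a b < eps /\ b \notin w)) => // H.
  exfalso; apply: (hinf a eps e0).
  apply: (@sub_finite_set _ _ [set` w]); last by apply/finite_seqP; exists w.
  move=> y ay /=; apply/negbNE/negP => yw; apply: H; exists y; split => //.
have bt : b \notin t by apply: contra bw; rewrite mem_cat => ->.
exists (b :: t); split.
- apply: good_cons => // p q r pt qt rt; split => E.
  + move: bw; rewrite !mem_cat negb_or => /andP[_]; rewrite negb_or => /andP[+ _].
    move/negP; apply; move/eqP: E; rewrite subr_eq => /eqP ->.
    by apply: (allpairs_f (fun p qr => qr.1 - qr.2 + p) pt (allpairs_f pair qt rt)).
  + move: bw; rewrite !mem_cat negb_or => /andP[_]; rewrite negb_or => /andP[_].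
    move/negP; apply; have -> : b = p - (q - r) by rewrite -E subKr.
    by apply: (allpairs_f (fun p qr => p - (qr.1 - qr.2)) pt (allpairs_f pair qt rt)).
- by rewrite /= bt.
- by rewrite /= st.
- move=> c; rewrite inE => /orP[/eqP->|cs]; first by exists b => //; rewrite mem_head.
  by have [b' b't cb'] := h1 c cs; exists b' => //; rewrite inE b't orbT.
- move=> b'; rewrite inE => /orP[/eqP->|b't]; first by exists a => //; rewrite mem_head.
  by have [c cs cb'] := h2 b' b't; exists c => //; rewrite inE cs orbT.
Qed.

Theorem corollary3p7 (X : zmodType) (R : realType) (d : X -> X -> R)
  (hmet : is_metric d) (hinv : translation_invariant d)
  (hinf : forall (x : X) (r : R), 0 < r -> infinite_set (oball d x r))
  (A : set X) (hA : inK d A)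
  (hcont : spectre_continuous_at d A) :
  spectre A = [set 0].
Proof.
have [d0 [deq [dsym dtri]]] := hmet.
have [[a0 Aa0] _] := hA.
apply/seteqP; split=> z; rewrite /spectre /=; last by move=> -> a Aa; left; rewrite addr0.
move=> Sz; case: (eqVneq z 0) => // nz; exfalso.
have epos : 0 < d z 0.
  rewrite lt0r d0 andbT; apply/eqP => /deq /eqP; by rewrite (negbTE nz).
have [delta dpos hB] := hcont _ epos.
have e0 : 0 < delta / 4 by rewrite divr_gt0.
have [s [sA snet]] := net hmet hA e0.
pose s' := a0 :: a0 :: a0 :: a0 :: a0 :: s.
have s'A : forall c, c \in s' -> A c.
  move=> c; rewrite !inE; do 5 (case/orP => [/eqP -> //|]); exact: sA.
have [t [gt ut st h1 h2]] := build hinf e0 s'.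
have st5 : (4 < size t)%N by rewrite st.
have SB := spec_seq gt ut st5.
have x0t : nth a0 t 0 \in t.
  by apply: mem_nth; apply: leq_ltn_trans st5.
have KB : inK d [set` t].
  by split; [exists (nth a0 t 0)| exact: seq_compact].
have dHB : dH d [set` t] A < delta.
  rewrite /dH gt_max; apply/andP; split.
  - apply: (@le_lt_trans _ _ (delta / 2)); last lra.
    apply: ge_sup.
      by exists (dist_pt_set d (nth a0 t 0) A); exists (nth a0 t 0).
    move=> _ [b bt <-]; have [c cs' cb] := h2 b bt.
    apply: (@le_trans _ _ (d b c)).
      apply: ge_inf; last by exists c => //; exact: s'A.
      by exists 0; move=> _ [a _ <-]; exact: d0.
    rewrite dsym; lra.
  - apply: (@le_lt_trans _ _ (delta / 2)); last lra.
    apply: ge_sup.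
      by exists (dist_pt_set d a0 [set` t]); exists a0.
    move=> _ [a Aa <-]; have [c cs ca] := snet a Aa.
    have cs' : c \in s' by rewrite /s' !inE cs !orbT.
    have [b bt cb] := h1 c cs'.
    apply: (@le_trans _ _ (d a b)).
      apply: ge_inf; last by exists b.
      by exists 0; move=> _ [y _ <-]; exact: d0.
    have := dtri a c b; rewrite (dsym a c); lra.
have := hB _ KB dHB; rewrite SB /dH => H.
have [M hM] := seq_bound (fun c => d c a0) s.
have hbd : forall a', A a' -> d a0 a' <= M + delta / 4.
  move=> a' Aa'; have [c cs ca] := snet a' Aa'.
  have := dtri a0 c a'; have := hM c cs; rewrite (dsym a0 c) /=; lra.
have Hz : d z 0 <= sup [set dist_pt_set d b [set 0] | b in spectre A].
  have -> : d z 0 = dist_pt_set d z [set 0] by rewrite /dist_pt_set image_set1 inf1.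
  apply: ub_le_sup; last by exists z.
  exists (M + delta / 4) => _ [y Sy <-]; rewrite /dist_pt_set image_set1 inf1.
  case: (Sy a0 Aa0) => Ay.
  - rewrite (hinv y 0 a0) add0r addrC dsym; exact: hbd.
  - rewrite dsym (hinv 0 y (a0 - y)) add0r (addrC y) subrK dsym; exact: hbd.
have : d z 0 < d z 0.
  apply: le_lt_trans H; apply: le_trans Hz _; by rewrite le_max lexx orbT.
by rewrite ltxx.
Qed.
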